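(* Let $\Gamma$ be a connected $3$-plane drawing. Then \[ 4|E_\times| \;\ge\; 2N(B_4)+2N(B_5)+2N(U_5)+2N(U_6). \]
   Context: Drawings are on the sphere: vertices are distinct points, edges (of a graph possibly with parallel edges, no loops) are Jordan arcs; any two edges share finitely many points, each a common endpoint or a proper crossing; no three edges cross at one point; no edge crosses itself; adjacent edges do not cross. A drawing is $3$-plane if every edge is crossed at most three times. For $i\in\{0,1,2,3\}$, $E_i$ is the set of edges with exactly $i$ crossings, and $E_\times=E_1\cup E_2\cup E_3$. An edge with $i$ crossings is split into $i+1$ edge-segments; an edge-segment is inner if both its endpoints are crossings and outer otherwise. The planarization replaces each crossing by a degree-$4$ vertex; the drawing is connected if its planarization is connected. Cells are the components of the sphere minus all vertices and edges; the boundary of a cell is a cyclic sequence alternating between edge-segments and vertices/crossings. Cell types: $B_4$: boundary $v$, outer segment, crossing, inner segment, crossing, outer segment. $B_5$: boundary $v$, outer segment, crossing, inner segment, crossing, inner segment, crossing, outer segment. $U_5$: boundary $u$, uncrossed edge $uv$, $v$, outer segment, crossing, outer segment (two vertices $u,v$). $U_6$: boundary $u$, uncrossed edge $uv$, $v$, outer segment, crossing, inner segment, crossing, outer segment. $N(T)$ is the number of cells of type $T$. *)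

(* Defs.v *)
(* Combinatorial encoding of a connected drawing on the sphere
   via its planarization (a connected plane map = rotation system of genus 0). *)
From mathcomp Require Import all_boot fingroup perm.
Set Implicit Arguments. Unset Strict Implicit. Unset Printing Implicit Defensive.

(* The planarization of a drawing, given as a combinatorial map:
   - [dart]  : half-edges of edge-segments of the planarization;
   - [pnode] : nodes of the planarization (vertices of the drawing and crossings);
   - [gedge] : edges of the drawn graph;
   - [alpha] : the other half of the same edge-segment (fixed-point-free involution);
   - [sigma] : rotation (cyclic order) of darts around their node;
   - [node]  : the node a dart leaves from;
   - [cr]    : which nodes are crossings (the others are vertices of the graph);
   - [eof]   : the edge of the graph the segment of a dart belongs to. *)
Record pdrawing := PDrawing {
  dart : finType;
  pnode : finType;
  gedge : finType;
  palpha : dart -> dart;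
  psigma : {perm dart};
  dnode : dart -> pnode;
  pcr : pred pnode;
  peof : dart -> gedge
}.

Section Drawings.
Variable G : pdrawing.

Local Notation D := (dart G).
Local Notation alpha := (@palpha G).
Local Notation sigma := (@psigma G).
Local Notation node := (@dnode G).
Local Notation cr := (@pcr G).
Local Notation eof := (@peof G).

(* face permutation: follow a segment, then turn to the next dart *)
Definition phi (d : D) : D := sigma (alpha d).
(* at a crossing, the dart opposite to d (continuation of the same edge) *)
Definition pass (d : D) : D := sigma (sigma d).

Definition cx (d : D) : bool := cr (node d).
Definition vx (d : D) : bool := ~~ cr (node d).

Definition cross_darts (e : gedge G) : {set D} := [set d | (eof d == e) && cx d].
Definition end_darts (e : gedge G) : {set D} := [set d | (eof d == e) && vx d].

(* number of crossings on e: each crossing of e contributes two darts of e *)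
Definition ncross (e : gedge G) : nat := #|cross_darts e| %/ 2.

Definition Ecross : {set gedge G} := [set e | 0 < ncross e].

Definition endpoint (e : gedge G) (v : pnode G) : bool :=
  [exists d in end_darts e, node d == v].

Definition plan_rel : rel D := [rel x y | (y == alpha x) || (y == sigma x)].
Definition edge_rel : rel D := [rel x y | (y == alpha x) || (cx x && (y == pass x))].

Definition face (d : D) : {set D} := [set d' | fconnect phi d d'].
Definition faces : {set {set D}} := [set face d | d : D].

Definition is_drawing : Prop :=
  (forall d, alpha (alpha d) = d) /\ (forall d, alpha d != d) /\
  (forall d d', (node d == node d') = fconnect sigma d d') /\
  (forall p, exists d, node d = p) /\
  (* sphere: Euler's formula  #nodes - #segments + #cells = 2 *)
  2 * (#|pnode G| + #|faces|) = #|D| + 4 /\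
  (* crossings: degree 4, proper crossing of two distinct, non-adjacent edges *)
  (forall c, cr c -> #|[set d | node d == c]| = 4) /\
  (forall d, cx d -> eof (pass d) = eof d /\ eof (sigma d) != eof d) /\
  (forall d, cx d -> forall v, ~~ cr v ->
             ~~ (endpoint (eof d) v && endpoint (eof (sigma d)) v)) /\
  (* edges: Jordan arcs between two distinct vertices (no loops) *)
  (forall d, eof (alpha d) = eof d) /\
  (forall e, #|end_darts e| = 2) /\
  (forall e d d', d \in end_darts e -> d' \in end_darts e -> d != d' ->
                  node d != node d') /\
  (forall e d d', eof d = e -> eof d' = e -> connect edge_rel d d').

Definition connected_drawing : Prop := forall d d', connect plan_rel d d'.

Definition three_plane : Prop := forall e, ncross e <= 3.

(* cell types, read off the boundary walk  node d, seg d, node (phi d), ... *)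
Definition typeB4 (F : {set D}) : bool :=
  (#|F| == 3) && [exists d in F, [&& vx d, cx (phi d) & cx (phi (phi d))]].
Definition typeB5 (F : {set D}) : bool :=
  (#|F| == 4) &&
  [exists d in F, [&& vx d, cx (phi d), cx (phi (phi d)) & cx (phi (phi (phi d)))]].
Definition typeU5 (F : {set D}) : bool :=
  (#|F| == 3) && [exists d in F, [&& vx d, vx (phi d) & cx (phi (phi d))]].
Definition typeU6 (F : {set D}) : bool :=
  (#|F| == 4) &&
  [exists d in F, [&& vx d, vx (phi d), cx (phi (phi d)) & cx (phi (phi (phi d)))]].

Definition N (T : {set D} -> bool) : nat := #|[set F in faces | T F]|.

End Drawings.

(* Main.v *)
Require Import Defs.
From mathcomp Require Import all_boot fingroup perm.
Set Implicit Arguments. Unset Strict Implicit. Unset Printing Implicit Defensive.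

Lemma trans_ex (T : Type) (f : T -> T) (P : pred T) x n :
  P x -> ~~ P (iter n f x) -> exists k, P (iter k f x) && ~~ P (iter k.+1 f x).
Proof.
elim: n => [|n IH] /= Px; first by rewrite Px.
case Pn: (P (iter n f x)) => H.
  by exists n; rewrite Pn /= H.
by apply: IH => //; rewrite Pn.
Qed.

Lemma nodeS (G : pdrawing) (Hn : forall d d' : dart G, (dnode d == dnode d') = fconnect (psigma G) d d') (d : dart G) :
  dnode (psigma G d) = dnode d.
Proof. apply/eqP; rewrite eq_sym Hn; exact: fconnect1. Qed.

Lemma phi_inj (G : pdrawing) (Ha : forall d : dart G, palpha (palpha d) = d) : injective (@phi G).
Proof. move=> x y; rewrite /phi => /perm_inj; exact: (can_inj Ha). Qed.

Lemma face_phi (G : pdrawing) (F : {set dart G}) x : F \in faces G -> x \in F -> phi x \in F.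
Proof.
move=> /imsetP [d _ ->]; rewrite !inE => H.
exact: connect_trans H (fconnect1 _ _).
Qed.

Lemma two_od (G : pdrawing) (Ha : forall d : dart G, palpha (palpha d) = d) (x y d : dart G) :
  fconnect (@phi G) d x -> fconnect (@phi G) d y -> vx x -> cx y ->
  exists a b, [/\ a != b, vx a != vx (phi a), vx b != vx (phi b),
                  fconnect (@phi G) d a & fconnect (@phi G) d b].
Proof.
have inj := phi_inj Ha.
have sym : connect_sym (frel (@phi G)) := fconnect_sym inj.
move=> dx dy vxx cxy.
have xy : fconnect (@phi G) x y by apply: connect_trans dy; rewrite sym.
have yx : fconnect (@phi G) y x by rewrite sym.
have ny : ~~ vx (iter (findex (@phi G) x y) (@phi G) x) by rewrite iter_findex // /vx negbK.
have nx : ~~ cx (iter (findex (@phi G) y x) (@phi G) y) by rewrite iter_findex //.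
have [k /andP[k1 k2]] := @trans_ex _ (@phi G) (@vx G) x _ vxx ny.
have [k' /andP[k1' k2']] := @trans_ex _ (@phi G) (@cx G) y _ cxy nx.
exists (iter k (@phi G) x), (iter k' (@phi G) y); split.
- by apply/eqP => E; move: k1 k1'; rewrite E /vx /cx => /negP.
- by move: k1 k2 => /=; rewrite /vx; case: (pcr _); case: (pcr _).
- by move: k1' k2' => /=; rewrite /vx /cx; case: (pcr _); case: (pcr _).
- exact: connect_trans dx (fconnect_iter _ _ _).
- exact: connect_trans dy (fconnect_iter _ _ _).
Qed.

Lemma typed_two (G : pdrawing) (Ha : forall d : dart G, palpha (palpha d) = d) (F : {set dart G}) :
  F \in faces G -> (exists2 d0, d0 \in F & vx d0 && cx (phi (phi d0))) ->
  exists a b, [/\ a != b, vx a != vx (phi a), vx b != vx (phi b), face a = F & face b = F].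
Proof.
have sym : connect_sym (frel (@phi G)) := fconnect_sym (phi_inj Ha).
move=> FF [d0 Fd0 /andP[v c]].
have Fd2 : phi (phi d0) \in F by do 2 apply: face_phi => //.
case/imsetP: FF => d _ EF.
rewrite EF !inE in Fd0 Fd2.
have [a [b [ab oa ob da db]]] := two_od Ha Fd0 Fd2 v c.
exists a, b; split => //; rewrite EF; apply/setP => z; rewrite !inE.
  by rewrite (same_connect sym da).
by rewrite (same_connect sym db).
Qed.

Lemma pass_neq (G : pdrawing)
  (Hn : forall d d' : dart G, (dnode d == dnode d') = fconnect (psigma G) d d')
  (H4 : forall c, pcr c -> #|[set d : dart G | dnode d == c]| = 4) (y : dart G) :
  cx y -> pass y != y.
Proof.
move=> cy; apply/eqP => E.
have := H4 _ cy.
suff : #|[set d : dart G | dnode d == dnode y]| <= 2 by move=> h h'; rewrite h' in h.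
apply: (@leq_trans #|[set y; psigma G y]|); last by rewrite cards2; case: (_ != _).
apply: subset_leq_card; apply/subsetP => z; rewrite inE eq_sym Hn => yz.
rewrite -(iter_findex yz).
elim: (findex _ y z) => [|n IH]; first by rewrite !inE eqxx.
rewrite iterS; move: IH; rewrite !inE => /orP[]/eqP->.
  by rewrite eqxx orbT.
by move: E; rewrite /pass => ->; rewrite eqxx.
Qed.

Lemma od_ecross (G : pdrawing)
  (Hn : forall d d' : dart G, (dnode d == dnode d') = fconnect (psigma G) d d')
  (H4 : forall c, pcr c -> #|[set d : dart G | dnode d == c]| = 4)
  (Hcx : forall d : dart G, cx d -> peof (pass d) = peof d /\ peof (psigma G d) != peof d)
  (Heof : forall d : dart G, peof (palpha d) = peof d) (x : dart G) :
  vx x != vx (phi x) -> peof x \in Ecross G.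
Proof.
have nphi : dnode (phi x) = dnode (palpha x) by rewrite /phi nodeS.
move=> h.
have [y [cy ey]] : exists y, cx y /\ peof y = peof x.
  case vxx: (vx x).
    exists (palpha x); split; last exact: Heof.
    by move: h; rewrite vxx /vx /cx nphi; case: (pcr _).
  by exists x; split => //; move: vxx; rewrite /vx /cx; case: (pcr _).
rewrite inE /ncross divn_gt0 //.
have [e1 _] := Hcx y cy.
apply: (@leq_trans #|[set y; pass y]|); first by rewrite cards2 eq_sym pass_neq.
apply/subset_leq_card/subsetP => z; rewrite !inE => /orP[]/eqP->; rewrite ?e1 ey eqxx /=.
  exact: cy.
by rewrite /cx /pass !nodeS.
Qed.

Lemma od_bound (G : pdrawing)
  (Ha : forall d : dart G, palpha (palpha d) = d)
  (Hn : forall d d' : dart G, (dnode d == dnode d') = fconnect (psigma G) d d')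
  (H4 : forall c, pcr c -> #|[set d : dart G | dnode d == c]| = 4)
  (Hcx : forall d : dart G, cx d -> peof (pass d) = peof d /\ peof (psigma G d) != peof d)
  (Heof : forall d : dart G, peof (palpha d) = peof d)
  (Hend : forall e : gedge G, #|end_darts e| = 2) :
  #|[set x : dart G | vx x != vx (phi x)]| <= 4 * #|Ecross G|.
Proof.
rewrite -sum1_card (partition_big (@peof G) (mem (Ecross G))); last first.
  by move=> x; rewrite inE; exact: od_ecross.
rewrite mulnC -sum_nat_const; apply: leq_sum => e _.
rewrite sum1dep_card.
apply: (@leq_trans #|end_darts e :|: (@palpha G) @: end_darts e|).
  apply/subset_leq_card/subsetP => z; rewrite !inE => /andP[h /eqP ez].
  case vz: (vx z); first by rewrite ez eqxx.
  apply/orP; right; apply/imsetP; exists (palpha z); last by rewrite Ha.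
  rewrite inE Heof ez eqxx /=.
  by move: h; rewrite vz /phi /vx (nodeS Hn); case: (pcr _).
apply: leq_trans (leq_card_setU _ _).1 _.
by rewrite Hend; have := leq_imset_card (@palpha G) (end_darts e); rewrite Hend.
Qed.

Lemma dist_vc (G : pdrawing) (a b : dart G) : vx a -> cx b -> (a == b) = false.
Proof. by move=> va cb; apply/eqP => E; move: va cb; rewrite E /vx /cx => /negbTE ->. Qed.

Lemma B4U5 (G : pdrawing) (Ha : forall d : dart G, palpha (palpha d) = d) (F : {set dart G}) :
  F \in faces G -> typeB4 F -> typeU5 F -> False.
Proof.
move=> FF /andP[/eqP c3 /existsP[d0 /andP[F0 /and3P[v0 c1 c2]]]].
move=> /andP[_ /existsP[d1 /andP[F1 /and3P[v1 v1' _]]]].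
have inj := phi_inj Ha.
have F1' : phi d0 \in F := face_phi FF F0.
have F2' : phi (phi d0) \in F := face_phi FF F1'.
have e01 := dist_vc v0 c1; have e02 := dist_vc v0 c2.
have n1 := dist_vc v1 c1; have n2 := dist_vc v1 c2.
case: (eqVneq d1 d0) => [E | n0].
  by move: v1' c1; rewrite E /vx /cx => /negbTE ->.
have : #|d1 |: (d0 |: (phi d0 |: [set phi (phi d0)]))| <= #|F|.
  by apply/subset_leq_card/subsetP => z; rewrite !inE => /or4P[]/eqP->.
by rewrite c3 !cardsU1 !cards1 !inE n1 n2 (negbTE n0) !(inj_eq inj) e01 e02.
Qed.

Lemma B5U6 (G : pdrawing) (Ha : forall d : dart G, palpha (palpha d) = d) (F : {set dart G}) :
  F \in faces G -> typeB5 F -> typeU6 F -> False.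
Proof.
move=> FF /andP[/eqP c3 /existsP[d0 /andP[F0 /and4P[v0 c1 c2 c3']]]].
move=> /andP[_ /existsP[d1 /andP[F1 /and4P[v1 v1' _ _]]]].
have inj := phi_inj Ha.
have F1' : phi d0 \in F := face_phi FF F0.
have F2' : phi (phi d0) \in F := face_phi FF F1'.
have F3' : phi (phi (phi d0)) \in F := face_phi FF F2'.
have e01 := dist_vc v0 c1; have e02 := dist_vc v0 c2; have e03 := dist_vc v0 c3'.
have n1 := dist_vc v1 c1; have n2 := dist_vc v1 c2; have n3 := dist_vc v1 c3'.
case: (eqVneq d1 d0) => [E | n0].
  by move: v1' c1; rewrite E /vx /cx => /negbTE ->.
have : #|d1 |: (d0 |: (phi d0 |: (phi (phi d0) |: [set phi (phi (phi d0))])))| <= #|F|.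
  by apply/subset_leq_card/subsetP => z; rewrite !inE => /or4P[|||/orP[]]/eqP->.
by rewrite c3 !cardsU1 !cards1 !inE n1 n2 n3 (negbTE n0) !(inj_eq inj) e01 e02 e03.
Qed.

Lemma cardU_dis (T : finType) (A B : {set T}) :
  (forall x, x \in A -> x \in B -> False) -> #|A :|: B| = #|A| + #|B|.
Proof.
move=> H; rewrite -cardsUI; suff -> : A :&: B = set0 by rewrite cards0 addn0.
by apply/setP => x; rewrite !inE; apply/negbTE/andP => [[]] /H; apply.
Qed.

Lemma excl (G : pdrawing) (Ha : forall d : dart G, palpha (palpha d) = d) (F : {set dart G}) :
  F \in faces G ->
  [&& ~~ (typeB4 F && typeB5 F), ~~ (typeB4 F && typeU5 F), ~~ (typeB4 F && typeU6 F),
      ~~ (typeB5 F && typeU5 F), ~~ (typeB5 F && typeU6 F) & ~~ (typeU5 F && typeU6 F)].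
Proof.
move=> FF.
have nB4U5 : ~~ (typeB4 F && typeU5 F).
  by apply/negP => /andP[h h']; exact (@B4U5 G Ha F FF h h').
have nB5U6 : ~~ (typeB5 F && typeU6 F) by apply/negP => /andP[h h']; exact (@B5U6 G Ha F FF h h').
rewrite nB4U5 nB5U6 /typeB4 /typeB5 /typeU5 /typeU6 /=.
by case: (#|F| == 3) / eqP => [->|_] //=; rewrite !andbF.
Qed.

Theorem mainTheorem5 (G : pdrawing) :
  is_drawing G -> connected_drawing G -> three_plane G ->
  2 * N (@typeB4 G) + 2 * N (@typeB5 G) + 2 * N (@typeU5 G) + 2 * N (@typeU6 G)
    <= 4 * #|Ecross G|.
Proof.
move=> [Ha [_ [Hn [_ [_ [H4 [Hcx [_ [Heof [Hend _]]]]]]]]]] _ _.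
set OD := [set x : dart G | vx x != vx (phi x)].
set T := [set F in faces G | [|| typeB4 F, typeB5 F, typeU5 F | typeU6 F]].
have h1 : #|OD| <= 4 * #|Ecross G| := od_bound Ha Hn H4 Hcx Heof Hend.
have h2 : 2 * #|T| <= #|OD|.
  pose OD' := [set x in OD | face x \in T].
  apply: (@leq_trans #|OD'|); last first.
    by apply/subset_leq_card/subsetP => x; rewrite inE => /andP[].
  rewrite -[#|OD'|]sum1_card (partition_big (@face G) (mem T)); last first.
    by move=> x; rewrite inE => /andP[].
  rewrite mulnC -sum_nat_const; apply: leq_sum => F; rewrite inE => /andP[FF tF].
  rewrite sum1dep_card.
  have ex : exists2 d0, d0 \in F & vx d0 && cx (phi (phi d0)).
    case/or4P: tF.
    - by move=> /andP[_ /existsP[d0 /andP[F0 /and3P[v0 _ c]]]]; exists d0; rewrite ?v0.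
    - by move=> /andP[_ /existsP[d0 /andP[F0 /and4P[v0 _ c _]]]]; exists d0; rewrite ?v0.
    - by move=> /andP[_ /existsP[d0 /andP[F0 /and3P[v0 _ c]]]]; exists d0; rewrite ?v0.
    - by move=> /andP[_ /existsP[d0 /andP[F0 /and4P[v0 _ c _]]]]; exists d0; rewrite ?v0.
  have [a [b [ab oa ob fa fb]]] := typed_two Ha FF ex.
  apply: (@leq_trans #|[set a; b]|); first by rewrite cards2 ab.
  apply/subset_leq_card/subsetP => z; rewrite !inE => /orP[]/eqP->.
    by rewrite fa FF tF oa eqxx.
  by rewrite fb FF tF ob eqxx.
have h3 : N (@typeB4 G) + N (@typeB5 G) + N (@typeU5 G) + N (@typeU6 G) = #|T|.
  rewrite /N /T.
  have -> : [set F in faces G | [|| typeB4 F, typeB5 F, typeU5 F | typeU6 F]] =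
     [set F in faces G | typeB4 F] :|: [set F in faces G | typeB5 F] :|:
     [set F in faces G | typeU5 F] :|: [set F in faces G | typeU6 F].
    by apply/setP => F; rewrite !inE !andb_orr !orbA.
  rewrite !cardU_dis // => F; rewrite !inE; case FF: (F \in faces G) => //=;
    move: (excl Ha FF);
    case: (typeB4 F); case: (typeB5 F); case: (typeU5 F); case: (typeU6 F) => //.
rewrite -h3 in h2.
rewrite -!mulnDr; exact: leq_trans h2 h1.
Qed.
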